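(* Let $a>0$, $k_d>0$, $x_0\in\mathbb{R}$, $y_0\in\mathbb{R}\setminus\{0\}$, and $\rho>0$ with $\rho a>2|y_0|$. For $(\ell_1,\ell_2)\in\mathbb{Z}^2$ set $$s(\ell_1,\ell_2)=\frac{\ell_1a-x_0+i(\ell_2a-y_0)}{|\ell_1a-x_0+i(\ell_2a-y_0)|}\cdot\frac{\ell_1a-x_0-i(\ell_2a+y_0)}{|\ell_1a-x_0-i(\ell_2a+y_0)|},$$ $\epsilon^{(1)}_{\ell_1,\ell_2}=\frac{a}{2\pi}\operatorname{Arg}\frac{s(\ell_1+1,\ell_2)}{s(\ell_1,\ell_2)}$, $\epsilon^{(2)}_{\ell_1,\ell_2}=\frac{a}{2\pi}\operatorname{Arg}\frac{s(\ell_1,\ell_2+1)}{s(\ell_1,\ell_2)}$, and $\Delta^{d(i,\pm)}_{\ell_1,\ell_2}=\sqrt{(a\pm\epsilon^{(i)}_{\ell_1,\ell_2})^2+a^2}-\sqrt2a$ for $i=1,2$. For $N>\rho$ let $B'_{\rho,N}$ be the set of $(\ell_1,\ell_2)\in\mathbb{Z}^2$ with $\rho a<\sqrt{(\ell_1a-x_0)^2+(\ell_2a-y_0)^2}<Na$ and $\rho a<\sqrt{(\ell_1a-x_0)^2+(\ell_2a+y_0)^2}<Na$, and $$E_{\rho,N}(\mathcal{S})=\sum_{(\ell_1,\ell_2)\in B'_{\rho,N}}\tfrac12k_d\Big((\Delta^{d(1,+)}_{\ell_1,\ell_2})^2+(\Delta^{d(2,+)}_{\ell_1,\ell_2})^2+(\Delta^{d(1,-)}_{\ell_1,\ell_2})^2+(\Delta^{d(2,-)}_{\ell_1,\ell_2})^2\Big).$$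 Then $E_{\rho,N}(\mathcal{S})$ converges to a finite limit as $N\to\infty$.
   Context: $\operatorname{Arg}$ is the principal argument in $(-\pi,\pi]$. This is the discrete (simple cubic lattice, spacing $a$, spring model with diagonal spring constant $k_d$) elastic energy of two parallel screw dislocations of opposite signs, $\mathcal{S}_+=\{x_0+iy_0\}$ and $\mathcal{S}_-=\{x_0-iy_0\}$. *)

(* Defs.v *)
From Stdlib Require Import Reals Lra ZArith.
Open Scope R_scope.

Definition C := (R * R)%type.
Definition cmul (z w : C) : C :=
  (fst z * fst w - snd z * snd w, fst z * snd w + snd z * fst w).
Definition cnorm (z : C) : R := sqrt (fst z ^ 2 + snd z ^ 2).
Definition cscale (r : R) (z : C) : C := (r * fst z, r * snd z).
Definition cconj (z : C) : C := (fst z, - snd z).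
(* z / w = z * conj w / |w|^2 (total: w = 0 gives 0 via Rinv 0). *)
Definition cdiv (z w : C) : C := cscale (/ (fst w ^ 2 + snd w ^ 2)) (cmul z (cconj w)).

(* Principal argument in (-PI, PI]; Arg 0 := 0 by convention. *)
Definition Arg (z : C) : R :=
  let x := fst z in let y := snd z in
  if Rlt_dec 0 x then atan (y / x)
  else if Rlt_dec x 0 then
    (if Rle_dec 0 y then atan (y / x) + PI else atan (y / x) - PI)
  else if Rlt_dec 0 y then PI / 2
  else if Rlt_dec y 0 then - (PI / 2)
  else 0.

Section Energy.
Variables (a kd x0 y0 : R).

Definition sfun (l1 l2 : Z) : C :=
  let u : C := (IZR l1 * a - x0, IZR l2 * a - y0) in
  let v : C := (IZR l1 * a - x0, - (IZR l2 * a + y0)) in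
  cmul (cscale (/ cnorm u) u) (cscale (/ cnorm v) v).

Definition eps1 (l1 l2 : Z) : R :=
  a / (2 * PI) * Arg (cdiv (sfun (l1 + 1) l2) (sfun l1 l2)).
Definition eps2 (l1 l2 : Z) : R :=
  a / (2 * PI) * Arg (cdiv (sfun l1 (l2 + 1)) (sfun l1 l2)).

Definition Dplus (e : R) : R := sqrt ((a + e) ^ 2 + a ^ 2) - sqrt 2 * a.
Definition Dminus (e : R) : R := sqrt ((a - e) ^ 2 + a ^ 2) - sqrt 2 * a.

Definition site_energy (l1 l2 : Z) : R :=
  1 / 2 * kd * (Dplus (eps1 l1 l2) ^ 2 + Dplus (eps2 l1 l2) ^ 2
              + Dminus (eps1 l1 l2) ^ 2 + Dminus (eps2 l1 l2) ^ 2).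

Definition inB (rho N : R) (l1 l2 : Z) : Prop :=
  rho * a < sqrt ((IZR l1 * a - x0) ^ 2 + (IZR l2 * a - y0) ^ 2) < N * a /\
  rho * a < sqrt ((IZR l1 * a - x0) ^ 2 + (IZR l2 * a + y0) ^ 2) < N * a.

Definition inB_dec (rho N : R) (l1 l2 : Z) : {inB rho N l1 l2} + {~ inB rho N l1 l2}.
Proof.
  unfold inB.
  destruct (Rlt_dec (rho * a) (sqrt ((IZR l1 * a - x0) ^ 2 + (IZR l2 * a - y0) ^ 2)));
  destruct (Rlt_dec (sqrt ((IZR l1 * a - x0) ^ 2 + (IZR l2 * a - y0) ^ 2)) (N * a));
  destruct (Rlt_dec (rho * a) (sqrt ((IZR l1 * a - x0) ^ 2 + (IZR l2 * a + y0) ^ 2)));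
  destruct (Rlt_dec (sqrt ((IZR l1 * a - x0) ^ 2 + (IZR l2 * a + y0) ^ 2)) (N * a));
  try (left; tauto); right; tauto.
Defined.

(* Half-width of an integer box [-K,K]^2 containing B'_{rho,N} (for a > 0):
   |l_i a| <= |l_i a - c| + |c| < N a + |x0| + |y0|. *)
Definition boxK (N : R) : nat :=
  Z.to_nat (up (N + Rabs x0 / a + Rabs y0 / a)).

(* E_{rho,N}: sum over (l1,l2) in B'_{rho,N}, computed as a sum over the box
   [-K,K]^2 (K = boxK N) of the indicator of B' times the site energy. *)
Definition E (rho N : R) : R :=
  let K := boxK N in
  sum_f_R0 (fun i =>
    sum_f_R0 (fun j =>
      let l1 := (Z.of_nat i - Z.of_nat K)%Z in
      let l2 := (Z.of_nat j - Z.of_nat K)%Z in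
      if inB_dec rho N l1 l2 then site_energy l1 l2 else 0)
    (2 * K)%nat) (2 * K)%nat.

End Energy.

(* Main.v *)
Require Import Defs.
From Stdlib Require Import Reals ZArith.
From Stdlib Require Import Lra Lia Psatz Classical.
Open Scope R_scope.

Lemma atan_abs_le (t : R) : Rabs (atan t) <= Rabs t.
Proof.
  destruct (MVT_abs atan (fun x => / (1 + x ^ 2)) 0 t) as [c [Hc _]].
  { intros c _; apply derivable_pt_lim_atan. }
  rewrite atan_0, !Rminus_0_r in Hc. rewrite Hc.
  assert (0 <= c ^ 2) by nra.
  assert (0 < / (1 + c^2) <= 1).
  { split. apply Rinv_0_lt_compat; lra.
    rewrite <- Rinv_1. apply Rinv_le_contravar; lra. }
  rewrite Rabs_pos_eq by lra.
  assert (0 <= Rabs t) by apply Rabs_pos. nra.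
Qed.

Lemma Arg_bound (z : Defs.C) : Rabs (Arg z) <= 2 * PI.
Proof.
  destruct z as [x y]. unfold Arg; simpl.
  pose proof (atan_bound (y / x)). pose proof PI_RGT_0.
  repeat destruct Rlt_dec; try destruct Rle_dec; try destruct Rlt_dec;
   apply Rabs_le; lra.
Qed.

Lemma Arg_scale (l : R) (z : Defs.C) : 0 < l -> Arg (cscale l z) = Arg z.
Proof.
  intro Hl. destruct z as [x y]. unfold Arg, cscale; simpl.
  assert (E : l * y / (l * x) = y / x \/ x = 0).
  { destruct (Req_dec x 0); [right; auto | left; field; lra]. }
  destruct (Rlt_dec 0 (l*x)); destruct (Rlt_dec 0 x); try nra.
  - destruct E as [E|E]; [rewrite E; auto | subst; lra].
  - destruct (Rlt_dec (l*x) 0); destruct (Rlt_dec x 0); try nra.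
    + destruct E as [E|E]; [rewrite E | subst; lra].
      destruct (Rle_dec 0 (l*y)); destruct (Rle_dec 0 y); try nra; auto.
    + destruct (Rlt_dec 0 (l*y)); destruct (Rlt_dec 0 y); try nra; auto.
      destruct (Rlt_dec (l*y) 0); destruct (Rlt_dec y 0); try nra; auto.
Qed.

Lemma Arg_pos (z : Defs.C) : 0 < fst z -> Rabs (Arg z) <= Rabs (snd z) / fst z.
Proof.
  destruct z as [x y]; simpl; intro Hx. unfold Arg; simpl.
  destruct (Rlt_dec 0 x); [|lra].
  eapply Rle_trans; [apply atan_abs_le|].
  unfold Rdiv. rewrite Rabs_mult, Rabs_inv, (Rabs_pos_eq x) by lra. lra.
Qed.


Definition nz (z : Defs.C) : Defs.C := cscale (/ cnorm z) z.
Definition nsq (z : Defs.C) : R := fst z ^ 2 + snd z ^ 2.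

Lemma cnorm_pos z : 0 < nsq z -> 0 < cnorm z.
Proof. intro H; unfold cnorm; apply sqrt_lt_R0; exact H. Qed.

Lemma Arg_quot (u v u' v' : Defs.C) :
  0 < nsq u -> 0 < nsq v -> 0 < nsq u' -> 0 < nsq v' ->
  Arg (cdiv (cmul (nz u') (nz v')) (cmul (nz u) (nz v))) =
  Arg (cmul (cmul u' v') (cconj (cmul u v))).
Proof.
  intros Hu Hv Hu' Hv'.
  pose proof (cnorm_pos _ Hu) as Nu. pose proof (cnorm_pos _ Hv) as Nv.
  pose proof (cnorm_pos _ Hu') as Nu'. pose proof (cnorm_pos _ Hv') as Nv'.
  set (al := / cnorm u'). set (be := / cnorm v'). set (ga := / cnorm u). set (de := / cnorm v).
  assert (Hal : 0 < al) by (apply Rinv_0_lt_compat; auto).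
  assert (Hbe : 0 < be) by (apply Rinv_0_lt_compat; auto).
  assert (Hga : 0 < ga) by (apply Rinv_0_lt_compat; auto).
  assert (Hde : 0 < de) by (apply Rinv_0_lt_compat; auto).
  destruct u as [u1 u2], v as [v1 v2], u' as [p1 p2], v' as [q1 q2].
  unfold nsq in *; simpl in *.
  set (D := (ga * u1 * (de * v1) - ga * u2 * (de * v2)) ^ 2 + (ga * u1 * (de * v2) + ga * u2 * (de * v1)) ^ 2).
  assert (HD : D = (ga*de)^2 * ((u1^2+u2^2)*(v1^2+v2^2))) by (unfold D; ring).
  assert (HD' : 0 < D) by (rewrite HD; assert (0 < ga*de) by nra; apply Rmult_lt_0_compat; [apply pow_lt; lra | apply Rmult_lt_0_compat; lra]).
  assert (Hk : 0 < / D * (al*be*ga*de)).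
  { apply Rmult_lt_0_compat; [apply Rinv_0_lt_compat; auto|].
    repeat apply Rmult_lt_0_compat; auto. }
  symmetry; rewrite <- (Arg_scale _ _ Hk); symmetry. f_equal.
  unfold cdiv, nz, cmul, cscale, cconj; cbn [fst snd]. fold al be ga de. fold D.
  f_equal; ring.
Qed.


Lemma abs_le_sq (x s : R) : 0 <= s -> x * x <= s * s -> Rabs x <= s.
Proof. intros. apply Rabs_le. split; nra. Qed.

Lemma Rabs_le_between x b : Rabs x <= b -> - b <= x <= b.
Proof. intro H. unfold Rabs in H; destruct Rcase_abs; lra. Qed.

Lemma core (a U V su sv al be IA IB M : R) :
  0 < a -> 0 <= su -> 0 <= sv -> su * su = U -> sv * sv = V ->
  4 * a <= su -> 4 * a <= sv ->
  Rabs al <= a * su -> Rabs be <= a * sv -> Rabs IA <= a * su -> Rabs IB <= a * sv ->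
  Rabs (U * IB + V * IA) <= M ->
  0 < (U + al) * (V + be) - IA * IB /\
  Rabs ((U + al) * IB + IA * (V + be)) / ((U + al) * (V + be) - IA * IB)
    <= 2 * (M + 2 * a ^ 2 * (su * sv)) / (U * V).
Proof.
  intros Ha Hsu Hsv HU HV H4u H4v Hal Hbe HIA HIB HM.
  apply Rabs_le_between in Hal, Hbe, HIA, HIB.
  assert (Ua : a * su <= U / 4) by nra.
  assert (Va : a * sv <= V / 4) by nra.
  assert (HUp : 0 < U) by nra. assert (HVp : 0 < V) by nra.
  assert (A1 : 3 * U / 4 <= U + al) by lra.
  assert (B1 : 3 * V / 4 <= V + be) by lra.
  assert (C1 : Rabs (IA * IB) <= U * V / 16).
  { rewrite Rabs_mult. apply Rle_trans with ((a*su)*(a*sv)).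
    apply Rmult_le_compat; try apply Rabs_pos; apply Rabs_le; lra.
    nra. }
  apply Rabs_le_between in C1.
  assert (Re : U * V / 2 <= (U + al) * (V + be) - IA * IB) by nra.
  assert (HUV : 0 < U * V) by nra.
  split; [lra|].
  assert (Im : Rabs ((U + al) * IB + IA * (V + be)) <= M + 2 * a ^ 2 * (su * sv)).
  { replace ((U + al) * IB + IA * (V + be)) with ((U * IB + V * IA) + (al * IB + be * IA)) by ring.
    eapply Rle_trans; [apply Rabs_triang|].
    apply Rplus_le_compat; auto.
    eapply Rle_trans; [apply Rabs_triang|]. rewrite !Rabs_mult.
    assert (Rabs al * Rabs IB <= (a*su)*(a*sv)).
    { apply Rmult_le_compat; try apply Rabs_pos; apply Rabs_le; lra. }
    assert (Rabs be * Rabs IA <= (a*sv)*(a*su)).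
    { apply Rmult_le_compat; try apply Rabs_pos; apply Rabs_le; lra. }
    nra. }
  assert (HM0 : 0 <= M + 2 * a ^ 2 * (su * sv)).
  { eapply Rle_trans; [apply Rabs_pos| exact Im]. }
  unfold Rdiv. apply Rle_trans with ((M + 2 * a ^ 2 * (su * sv)) * / ((U + al) * (V + be) - IA * IB)).
  apply Rmult_le_compat_r; [left; apply Rinv_0_lt_compat; lra| exact Im].
  replace (2 * (M + 2 * a ^ 2 * (su * sv)) * / (U * V)) with ((M + 2 * a ^ 2 * (su * sv)) * (2 * / (U * V))) by ring.
  apply Rmult_le_compat_l; [lra|].
  replace (2 * / (U * V)) with (/ (U * V / 2)) by (field; lra).
  apply Rinv_le_contravar; lra.
Qed.


Lemma nsq_pos_u (p1 p2 q1 q2 w1 w2 : R) :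
  0 < fst (cmul (cmul (p1, p2) (q1, q2)) (w1, w2)) ->
  0 < nsq (p1, p2) /\ 0 < nsq (q1, q2).
Proof.
  unfold nsq, cmul; cbn [fst snd]; intro H.
  split.
  - destruct (Req_dec p1 0); destruct (Req_dec p2 0); try nra; subst; nra.
  - destruct (Req_dec q1 0); destruct (Req_dec q2 0); try nra; subst; nra.
Qed.

Lemma P_bound (a y0 X Y h1 h2 : R) : 0 < a ->
  ((h1 = a /\ h2 = 0) \/ (h1 = 0 /\ h2 = a)) ->
  64 * a ^ 2 + 4 * y0 ^ 2 <= X ^ 2 + Y ^ 2 ->
  0 < fst (cmul (cmul (X + h1, Y - y0 + h2) (X + h1, - (Y + y0) - h2))
               (cconj (cmul (X, Y - y0) (X, - (Y + y0))))) /\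
  Rabs (Arg (cmul (cmul (X + h1, Y - y0 + h2) (X + h1, - (Y + y0) - h2))
               (cconj (cmul (X, Y - y0) (X, - (Y + y0))))))
   <= 128 * a * (Rabs y0 + a) / (X ^ 2 + Y ^ 2).
Proof.
  intros Ha Hh Hr.
  set (r2 := X ^ 2 + Y ^ 2) in *.
  set (U := X ^ 2 + (Y - y0) ^ 2). set (V := X ^ 2 + (Y + y0) ^ 2).
  assert (HU4 : r2 / 4 <= U) by (unfold U, r2 in *; nra).
  assert (HV4 : r2 / 4 <= V) by (unfold V, r2 in *; nra).
  set (su := sqrt U). set (sv := sqrt V).
  assert (Hy2 : 0 <= y0 ^ 2) by nra.
  assert (Hr2 : 0 < r2) by nra.
  assert (HU0 : 0 <= U) by lra. assert (HV0 : 0 <= V) by lra.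
  assert (Hsu : su * su = U) by (apply sqrt_sqrt; lra).
  assert (Hsv : sv * sv = V) by (apply sqrt_sqrt; lra).
  assert (Hsu0 : 0 <= su) by apply sqrt_pos.
  assert (Hsv0 : 0 <= sv) by apply sqrt_pos.
  assert (H16 : 16 * a ^ 2 <= r2 / 4) by lra.
  assert (H4u : 4 * a <= su).
  { destruct (Rle_lt_dec (4 * a) su); auto. assert (su * su < (4*a)*(4*a)) by (apply Rmult_le_0_lt_compat; lra). nra. }
  assert (H4v : 4 * a <= sv).
  { destruct (Rle_lt_dec (4 * a) sv); auto. assert (sv * sv < (4*a)*(4*a)) by (apply Rmult_le_0_lt_compat; lra). nra. }
  assert (Xu : Rabs X <= su) by (apply abs_le_sq; [assumption | rewrite Hsu; unfold U; pose proof (pow2_ge_0 (Y - y0)); pose proof (pow2_ge_0 X); nra]).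
  assert (Xv : Rabs X <= sv) by (apply abs_le_sq; [assumption | rewrite Hsv; unfold V; pose proof (pow2_ge_0 (Y + y0)); pose proof (pow2_ge_0 X); nra]).
  assert (Yu : Rabs (Y - y0) <= su) by (apply abs_le_sq; [assumption | rewrite Hsu; unfold U; pose proof (pow2_ge_0 (Y - y0)); pose proof (pow2_ge_0 X); nra]).
  assert (Yv : Rabs (Y + y0) <= sv) by (apply abs_le_sq; [assumption | rewrite Hsv; unfold V; pose proof (pow2_ge_0 (Y + y0)); pose proof (pow2_ge_0 X); nra]).
  set (t := Rabs y0).
  assert (Ht : t * t = y0 ^ 2) by (unfold t; rewrite <- Rabs_mult; rewrite Rabs_pos_eq; nra).
  assert (Ht0 : 0 <= t) by apply Rabs_pos.
  set (M := 2 * a * t * (r2 + y0 ^ 2)).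
  assert (Hsusv : 2 * (su * sv) <= U + V) by (pose proof (pow2_ge_0 (su - sv)); nra).
  assert (HUV : r2 ^ 2 / 16 <= U * V).
  { assert (r2/4 * (r2/4) <= U * V) by (apply Rmult_le_compat; lra). nra. }
  assert (Fin : forall al be IA IB,
     Rabs al <= a * su -> Rabs be <= a * sv -> Rabs IA <= a * su -> Rabs IB <= a * sv ->
     Rabs (U * IB + V * IA) <= M ->
     0 < (U + al) * (V + be) - IA * IB /\
     Rabs ((U + al) * IB + IA * (V + be)) / ((U + al) * (V + be) - IA * IB)
       <= 128 * a * (t + a) / r2).
  { intros al be IA IB H1 H2 H3 H4 H5.
    destruct (core a U V su sv al be IA IB M Ha Hsu0 Hsv0 Hsu Hsv H4u H4v H1 H2 H3 H4 H5) as [C1 C2].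
    split; auto. eapply Rle_trans; [exact C2|].
    assert (Hnum : 2 * (M + 2 * a ^ 2 * (su * sv)) <= 8 * a * (t + a) * r2).
    { unfold M. assert (U + V = 2 * (r2 + y0 ^ 2)) by (unfold U, V, r2; ring).
      assert (y0 ^ 2 <= r2) by (pose proof (pow2_ge_0 a); lra).
      assert (a ^ 2 * (2 * (su * sv)) <= a^2 * (U + V)) by (apply Rmult_le_compat_l; nra).
      assert (a * t * y0 ^ 2 <= a * t * r2) by (apply Rmult_le_compat_l; nra).
      assert (a ^ 2 * y0 ^ 2 <= a ^ 2 * r2) by (apply Rmult_le_compat_l; nra).
      nra. }
    assert (0 < U * V) by nra.
    unfold Rdiv. apply Rle_trans with (8 * a * (t + a) * r2 * / (U * V)).
    apply Rmult_le_compat_r; [left; apply Rinv_0_lt_compat; lra| lra].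
    apply Rle_trans with (8 * a * (t + a) * r2 * / (r2 ^ 2 / 16)).
    apply Rmult_le_compat_l; [apply Rmult_le_pos; [nra|lra]|]. apply Rinv_le_contravar; [assert (0 < r2 ^ 2) by (apply pow_lt; lra); lra | lra].
    right. field. lra. }
  assert (Fin2 : forall al be IA IB,
     Rabs al <= a * su -> Rabs be <= a * sv -> Rabs IA <= a * su -> Rabs IB <= a * sv ->
     Rabs (U * IB + V * IA) <= M ->
     forall P : Defs.C, P = ((U + al) * (V + be) - IA * IB, (U + al) * IB + IA * (V + be)) ->
     0 < fst P /\ Rabs (Arg P) <= 128 * a * (t + a) / r2).
  { intros al be IA IB H1 H2 H3 H4 H5 P ->.
    destruct (Fin al be IA IB H1 H2 H3 H4 H5) as [F1 F2].
    split; [exact F1|]. eapply Rle_trans; [apply Arg_pos; exact F1| exact F2]. }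
  destruct Hh as [[-> ->] | [-> ->]].
  - apply (Fin2 (a * X) (a * X) (- (a * (Y - y0))) (a * (Y + y0))).
    + rewrite Rabs_mult, Rabs_pos_eq by lra. nra.
    + rewrite Rabs_mult, Rabs_pos_eq by lra. nra.
    + rewrite Rabs_Ropp, Rabs_mult, Rabs_pos_eq by lra. nra.
    + rewrite Rabs_mult, Rabs_pos_eq by lra. nra.
    + replace (U * (a * (Y + y0)) + V * - (a * (Y - y0))) with ((2 * a) * y0 * (X ^ 2 - Y ^ 2 + y0 ^ 2)) by (unfold U, V; ring).
      rewrite Rabs_mult, (Rabs_mult (2*a)), (Rabs_pos_eq (2*a)) by lra. fold t. unfold M.
      assert (Rabs (X ^ 2 - Y ^ 2 + y0 ^ 2) <= r2 + y0 ^ 2).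
      { apply Rabs_le. unfold r2. pose proof (pow2_ge_0 X); pose proof (pow2_ge_0 Y). lra. }
      assert (0 <= 2 * a * t) by nra.
      pose proof (Rmult_le_compat_l _ _ _ H0 H). lra.
    + unfold cmul, cconj; cbn [fst snd]. f_equal; unfold U, V; ring.
  - apply (Fin2 (a * (Y - y0)) (a * (Y + y0)) (a * X) (- (a * X))).
    + rewrite Rabs_mult, Rabs_pos_eq by lra. nra.
    + rewrite Rabs_mult, Rabs_pos_eq by lra. nra.
    + rewrite Rabs_mult, Rabs_pos_eq by lra. nra.
    + rewrite Rabs_Ropp, Rabs_mult, Rabs_pos_eq by lra. nra.
    + replace (U * - (a * X) + V * (a * X)) with ((4 * a) * y0 * (X * Y)) by (unfold U, V; ring).
      rewrite Rabs_mult, (Rabs_mult (4*a)), (Rabs_pos_eq (4*a)) by lra. fold t. unfold M.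
      assert (Rabs X * Rabs Y <= r2 / 2).
      { rewrite <- Rabs_mult. apply Rabs_le. unfold r2. pose proof (pow2_ge_0 (X - Y)); pose proof (pow2_ge_0 (X + Y)). nra. }
      assert (0 <= 4 * a * t) by nra.
      pose proof (Rmult_le_compat_l _ _ _ H0 H). assert (0 <= a * t * y0 ^ 2) by (apply Rmult_le_pos; nra). rewrite Rabs_mult. lra.
    + unfold cmul, cconj; cbn [fst snd]. f_equal; unfold U, V; ring.
Qed.


Lemma nsq_pos_w (p1 p2 q1 q2 : R) (w : Defs.C) :
  0 < fst (cmul w (cconj (cmul (p1, p2) (q1, q2)))) ->
  0 < nsq (p1, p2) /\ 0 < nsq (q1, q2).
Proof.
  destruct w as [w1 w2].
  unfold nsq, cmul, cconj; cbn [fst snd]; intro H.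
  split.
  - destruct (Req_dec p1 0); destruct (Req_dec p2 0); try nra; subst; nra.
  - destruct (Req_dec q1 0); destruct (Req_dec q2 0); try nra; subst; nra.
Qed.

Definition Kc (a y0 : R) := a / (2 * PI) * (128 * a * (Rabs y0 + a)).

Lemma eps_gen (a y0 X Y h1 h2 : R) : 0 < a ->
  ((h1 = a /\ h2 = 0) \/ (h1 = 0 /\ h2 = a)) ->
  64 * a ^ 2 + 4 * y0 ^ 2 <= X ^ 2 + Y ^ 2 ->
  Rabs (a / (2 * PI) * Arg (cdiv (cmul (nz (X + h1, Y - y0 + h2)) (nz (X + h1, - (Y + y0) - h2)))
                                 (cmul (nz (X, Y - y0)) (nz (X, - (Y + y0))))))
   <= Kc a y0 / (X ^ 2 + Y ^ 2).
Proof.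
  intros Ha Hh Hr.
  destruct (P_bound a y0 X Y h1 h2 Ha Hh Hr) as [F1 F2].
  destruct (nsq_pos_u _ _ _ _ _ _ F1) as [N1 N2].
  destruct (nsq_pos_w _ _ _ _ _ F1) as [N3 N4].
  rewrite Arg_quot by assumption.
  pose proof PI_RGT_0.
  rewrite Rabs_mult, (Rabs_pos_eq (a / (2 * PI))) by (apply Rlt_le; apply Rdiv_lt_0_compat; lra).
  unfold Kc. unfold Rdiv at 2. rewrite Rmult_assoc.
  apply Rmult_le_compat_l; [apply Rlt_le; apply Rdiv_lt_0_compat; lra|].
  exact F2.
Qed.

Lemma sfun_eq (a x0 y0 : R) (l1 l2 : Z) :
  sfun a x0 y0 l1 l2 = cmul (nz (IZR l1 * a - x0, IZR l2 * a - y0)) (nz (IZR l1 * a - x0, - (IZR l2 * a + y0))).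
Proof. reflexivity. Qed.

Lemma eps1_bound (a x0 y0 : R) (l1 l2 : Z) : 0 < a ->
  64 * a ^ 2 + 4 * y0 ^ 2 <= (IZR l1 * a - x0) ^ 2 + (IZR l2 * a) ^ 2 ->
  Rabs (eps1 a x0 y0 l1 l2) <= Kc a y0 / ((IZR l1 * a - x0) ^ 2 + (IZR l2 * a) ^ 2).
Proof.
  intros Ha Hr.
  pose proof (eps_gen a y0 (IZR l1 * a - x0) (IZR l2 * a) a 0 Ha (or_introl (conj eq_refl eq_refl)) Hr) as H.
  unfold eps1. rewrite !sfun_eq.
  replace (IZR (l1 + 1) * a - x0) with (IZR l1 * a - x0 + a) by (rewrite plus_IZR; ring).
  rewrite Rplus_0_r, Rminus_0_r in H. exact H.
Qed.

Lemma eps2_bound (a x0 y0 : R) (l1 l2 : Z) : 0 < a ->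
  64 * a ^ 2 + 4 * y0 ^ 2 <= (IZR l1 * a - x0) ^ 2 + (IZR l2 * a) ^ 2 ->
  Rabs (Defs.eps2 a x0 y0 l1 l2) <= Kc a y0 / ((IZR l1 * a - x0) ^ 2 + (IZR l2 * a) ^ 2).
Proof.
  intros Ha Hr.
  pose proof (eps_gen a y0 (IZR l1 * a - x0) (IZR l2 * a) 0 a Ha (or_intror (conj eq_refl eq_refl)) Hr) as H.
  unfold Defs.eps2. rewrite !sfun_eq.
  replace (IZR (l2 + 1) * a - y0) with (IZR l2 * a - y0 + a) by (rewrite plus_IZR; ring).
  replace (- (IZR (l2 + 1) * a + y0)) with (- (IZR l2 * a + y0) - a) by (rewrite plus_IZR; ring).
  rewrite !Rplus_0_r in H. exact H.
Qed.


Lemma Dgen (a d : R) : 0 < a -> Rabs d <= a ->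
  (sqrt ((a + d) ^ 2 + a ^ 2) - sqrt 2 * a) ^ 2 <= 9 * d ^ 2.
Proof.
  intros Ha Hd. apply Rabs_le_between in Hd.
  set (s := sqrt ((a + d) ^ 2 + a ^ 2)). set (c := sqrt 2 * a).
  assert (Hs : s * s = (a + d) ^ 2 + a ^ 2) by (apply sqrt_sqrt; nra).
  assert (Hs0 : 0 <= s) by apply sqrt_pos.
  assert (H2 : sqrt 2 * sqrt 2 = 2) by (apply sqrt_sqrt; lra).
  assert (H21 : 1 <= sqrt 2).
  { rewrite <- sqrt_1. apply sqrt_le_1_alt. lra. }
  assert (Hc : c * c = 2 * a ^ 2) by (unfold c; nra).
  assert (Hca : a <= c) by (unfold c; nra).
  assert (E : (s - c) * (s + c) = 2 * a * d + d ^ 2) by nra.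
  assert (E2 : (2 * a * d + d ^ 2) ^ 2 <= 9 * a ^ 2 * d ^ 2).
  { replace ((2 * a * d + d ^ 2) ^ 2) with (d ^ 2 * (2 * a + d) ^ 2) by ring.
    replace (9 * a ^ 2 * d ^ 2) with (d ^ 2 * (3 * a) ^ 2) by ring.
    apply Rmult_le_compat_l; [apply pow2_ge_0|]. apply pow_incr. split; lra. }
  assert (E3 : (s - c) ^ 2 * a ^ 2 <= (s - c) ^ 2 * (s + c) ^ 2).
  { apply Rmult_le_compat_l; [apply pow2_ge_0|].
    assert (a <= s + c) by lra. apply pow_incr; lra. }
  assert (E4 : (s - c) ^ 2 * (s + c) ^ 2 = (2 * a * d + d ^ 2) ^ 2).
  { rewrite <- E. ring. }
  assert (E5 : (s - c) ^ 2 * a ^ 2 <= (9 * d ^ 2) * a ^ 2) by nra.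
  apply Rmult_le_reg_r with (a ^ 2); [nra| exact E5].
Qed.

Lemma eps_small (a x : R) : 0 < a -> Rabs (a / (2 * PI) * x) <= a * (Rabs x / (2 * PI)).
Proof.
  intro Ha. pose proof PI_RGT_0.
  rewrite Rabs_mult, Rabs_pos_eq by (apply Rlt_le, Rdiv_lt_0_compat; lra).
  right. field. lra.
Qed.

Lemma eps1_le (a x0 y0 : R) l1 l2 : 0 < a -> Rabs (Defs.eps1 a x0 y0 l1 l2) <= a.
Proof.
  intro Ha. unfold Defs.eps1. eapply Rle_trans; [apply eps_small; auto|].
  pose proof PI_RGT_0. pose proof (Arg_bound (cdiv (sfun a x0 y0 (l1 + 1) l2) (sfun a x0 y0 l1 l2))).
  assert (Rabs (Arg (cdiv (sfun a x0 y0 (l1 + 1) l2) (sfun a x0 y0 l1 l2))) / (2 * PI) <= 1).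
  { apply Rmult_le_reg_r with (2 * PI); [lra|]. unfold Rdiv. rewrite Rmult_assoc, Rinv_l; lra. }
  nra.
Qed.

Lemma eps2_le (a x0 y0 : R) l1 l2 : 0 < a -> Rabs (Defs.eps2 a x0 y0 l1 l2) <= a.
Proof.
  intro Ha. unfold Defs.eps2. eapply Rle_trans; [apply eps_small; auto|].
  pose proof PI_RGT_0. pose proof (Arg_bound (cdiv (sfun a x0 y0 l1 (l2 + 1)) (sfun a x0 y0 l1 l2))).
  assert (Rabs (Arg (cdiv (sfun a x0 y0 l1 (l2 + 1)) (sfun a x0 y0 l1 l2))) / (2 * PI) <= 1).
  { apply Rmult_le_reg_r with (2 * PI); [lra|]. unfold Rdiv. rewrite Rmult_assoc, Rinv_l; lra. }
  nra.
Qed.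

Lemma site_le_eps (a kd x0 y0 : R) l1 l2 : 0 < a -> 0 < kd ->
  site_energy a kd x0 y0 l1 l2 <=
    9 * kd * (Defs.eps1 a x0 y0 l1 l2 ^ 2 + Defs.eps2 a x0 y0 l1 l2 ^ 2).
Proof.
  intros Ha Hk. unfold site_energy, Defs.Dplus, Defs.Dminus.
  pose proof (eps1_le a x0 y0 l1 l2 Ha). pose proof (eps2_le a x0 y0 l1 l2 Ha).
  set (e1 := Defs.eps1 a x0 y0 l1 l2) in *. set (e2 := Defs.eps2 a x0 y0 l1 l2) in *.
  pose proof (Dgen a e1 Ha H). pose proof (Dgen a e2 Ha H0).
  assert (Rabs (- e1) <= a) by (rewrite Rabs_Ropp; auto).
  assert (Rabs (- e2) <= a) by (rewrite Rabs_Ropp; auto).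
  pose proof (Dgen a (- e1) Ha H3). pose proof (Dgen a (- e2) Ha H4).
  replace (a - e1) with (a + - e1) by ring. replace (a - e2) with (a + - e2) by ring.
  replace ((- e1) ^ 2) with (e1 ^ 2) in H5 by ring.
  replace ((- e2) ^ 2) with (e2 ^ 2) in H6 by ring.
  nra.
Qed.


Definition R0c (a x0 y0 : R) := 64 * a ^ 2 + 4 * y0 ^ 2 + a ^ 2 + 2 * x0 ^ 2.
Definition Qc (a x0 y0 : R) := 2 * R0c a x0 y0 + a ^ 2 + 2 * x0 ^ 2.
Definition Cst (a kd x0 y0 : R) :=
  (162 * kd * Kc a y0 ^ 2 + 18 * kd * a ^ 2 * Qc a x0 y0 ^ 2) / a ^ 4.

Lemma eps_sq (e K r2 : R) : 0 < r2 -> Rabs e <= K / r2 -> e ^ 2 * r2 ^ 2 <= K ^ 2.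
Proof.
  intros Hr He.
  assert (Rabs e * r2 <= K) by (apply Rmult_le_reg_r with (/ r2);
    [apply Rinv_0_lt_compat; lra| rewrite Rmult_assoc, Rinv_r by lra; lra]).
  assert (0 <= Rabs e * r2) by (apply Rmult_le_pos; [apply Rabs_pos|lra]).
  replace (e ^ 2 * r2 ^ 2) with ((Rabs e * r2) ^ 2) by (rewrite <- (pow2_abs e); ring).
  apply pow_incr. lra.
Qed.

Lemma site_bound (a kd x0 y0 : R) (l1 l2 : Z) : 0 < a -> 0 < kd ->
  site_energy a kd x0 y0 l1 l2 * ((1 + IZR l1 ^ 2) * (1 + IZR l2 ^ 2)) <= Cst a kd x0 y0.
Proof.
  intros Ha Hk.
  pose proof (site_le_eps a kd x0 y0 l1 l2 Ha Hk) as HS.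
  pose proof (eps1_le a x0 y0 l1 l2 Ha) as B1. pose proof (eps2_le a x0 y0 l1 l2 Ha) as B2.
  set (p := IZR l1) in *. set (q := IZR l2) in *.
  set (X := p * a - x0). set (Y := q * a).
  set (r2 := X ^ 2 + Y ^ 2).
  set (W := (1 + p ^ 2) * (1 + q ^ 2)).
  assert (Hp2 : 0 <= p ^ 2) by apply pow2_ge_0. assert (Hq2 : 0 <= q ^ 2) by apply pow2_ge_0.
  assert (HW0 : 0 < W) by (unfold W; nra).
  assert (HWn : W <= (1 + p ^ 2 + q ^ 2) ^ 2) by (unfold W; nra).
  assert (Ha2 : 0 < a ^ 2) by (apply pow_lt; lra).
  assert (Ha4 : a ^ 4 = a ^ 2 * a ^ 2) by ring.
  assert (Hx2 : 0 <= x0 ^ 2) by apply pow2_ge_0. assert (Hy2 : 0 <= y0 ^ 2) by apply pow2_ge_0.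
  assert (Hlin : a ^ 2 * (1 + p ^ 2 + q ^ 2) <= 2 * r2 + a ^ 2 + 2 * x0 ^ 2).
  { unfold r2, X, Y. pose proof (pow2_ge_0 (p * a - x0 - x0)). pose proof (pow2_ge_0 (p*a - x0 + x0)). nra. }
  set (site := site_energy a kd x0 y0 l1 l2) in *.
  set (e1 := Defs.eps1 a x0 y0 l1 l2) in *. set (e2 := Defs.eps2 a x0 y0 l1 l2) in *.
  assert (Hsite0 : 0 <= site).
  { unfold site, site_energy. apply Rmult_le_pos; [lra|]. repeat apply Rplus_le_le_0_compat; apply pow2_ge_0. }
  assert (HK0 : 0 <= Kc a y0 ^ 2) by apply pow2_ge_0.
  assert (HQ0 : 0 <= Qc a x0 y0 ^ 2) by apply pow2_ge_0.
  unfold Cst. apply Rmult_le_reg_r with (a ^ 4); [apply pow_lt; lra|].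
  unfold Rdiv. rewrite (Rmult_assoc _ (/ a ^ 4) (a ^ 4)), Rinv_l, Rmult_1_r by (apply pow_nonzero; lra). rewrite (Rmult_assoc site W). fold W.
  destruct (Rle_lt_dec (R0c a x0 y0) r2) as [Hbig | Hsmall].
  - assert (Hr : 64 * a ^ 2 + 4 * y0 ^ 2 <= X ^ 2 + Y ^ 2) by (unfold R0c in Hbig; fold r2; lra).
    pose proof (eps1_bound a x0 y0 l1 l2 Ha Hr) as E1. pose proof (eps2_bound a x0 y0 l1 l2 Ha Hr) as E2.
    fold p q X Y r2 e1 e2 in E1, E2.
    assert (Hr0 : 0 < r2) by (pose proof (pow2_ge_0 y0); unfold R0c in Hbig; lra).
    pose proof (eps_sq _ _ _ Hr0 E1). pose proof (eps_sq _ _ _ Hr0 E2).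
    assert (Hs2 : site * r2 ^ 2 <= 18 * kd * Kc a y0 ^ 2) by nra.
    assert (HW9 : a ^ 4 * W <= 9 * r2 ^ 2).
    { assert (a ^ 2 * (1 + p ^ 2 + q ^ 2) <= 3 * r2) by (unfold R0c in Hbig; lra).
      assert (0 <= a ^ 2 * (1 + p ^ 2 + q ^ 2)) by nra.
      assert ((a ^ 2 * (1 + p ^ 2 + q ^ 2)) ^ 2 <= (3 * r2) ^ 2) by (apply pow_incr; lra).
      assert (a ^ 4 * W <= a ^ 4 * (1 + p ^ 2 + q ^ 2) ^ 2) by (apply Rmult_le_compat_l; [nra|lra]).
      nra. }
    assert (site * (a ^ 4 * W) <= site * (9 * r2 ^ 2)) by (apply Rmult_le_compat_l; lra).
    assert (0 <= 18 * kd * a ^ 2 * Qc a x0 y0 ^ 2) by (apply Rmult_le_pos; [apply Rmult_le_pos; lra | lra]).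
    nra.
  - assert (Hsite : site <= 18 * kd * a ^ 2).
    { assert (e1 ^ 2 <= a ^ 2) by (rewrite <- (pow2_abs e1); apply pow_incr; split; [apply Rabs_pos|lra]).
      assert (e2 ^ 2 <= a ^ 2) by (rewrite <- (pow2_abs e2); apply pow_incr; split; [apply Rabs_pos|lra]).
      nra. }
    assert (HWQ : a ^ 4 * W <= Qc a x0 y0 ^ 2).
    { assert (a ^ 2 * (1 + p ^ 2 + q ^ 2) <= Qc a x0 y0) by (unfold Qc; lra).
      assert (0 <= a ^ 2 * (1 + p ^ 2 + q ^ 2)) by nra.
      assert ((a ^ 2 * (1 + p ^ 2 + q ^ 2)) ^ 2 <= Qc a x0 y0 ^ 2) by (apply pow_incr; lra).
      assert (a ^ 4 * W <= a ^ 4 * (1 + p ^ 2 + q ^ 2) ^ 2) by (apply Rmult_le_compat_l; [nra|lra]).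
      nra. }
    assert (site * (a ^ 4 * W) <= (18 * kd * a ^ 2) * Qc a x0 y0 ^ 2).
    { apply Rmult_le_compat; [lra | apply Rmult_le_pos; [apply pow_le; lra| lra] | lra | lra]. }
    assert (0 <= 162 * kd * Kc a y0 ^ 2) by (apply Rmult_le_pos; [apply Rmult_le_pos; lra | lra]).
    nra.
Qed.


Definition T (K : nat) (g : Z -> R) : R :=
  sum_f_R0 (fun i => g (Z.of_nat i - Z.of_nat K)%Z) (2 * K).

Lemma T_S (K : nat) (g : Z -> R) :
  T (S K) g = g (- Z.of_nat (S K))%Z + T K g + g (Z.of_nat (S K)).
Proof.
  unfold T. replace (2 * S K)%nat with (S (S (2 * K))) by lia.
  rewrite decomp_sum by lia. cbn [Nat.pred]. rewrite tech5.
  replace (g (Z.of_nat 0 - Z.of_nat (S K))%Z) with (g (- Z.of_nat (S K))%Z) by (f_equal; lia).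
  replace (g (Z.of_nat (S (S (2 * K))) - Z.of_nat (S K))%Z) with (g (Z.of_nat (S K))) by (f_equal; lia).
  rewrite (sum_eq _ (fun i => g (Z.of_nat i - Z.of_nat K)%Z)) by (intros i _; f_equal; lia).
  ring.
Qed.

Lemma T_nonneg K g : (forall z, 0 <= g z) -> 0 <= T K g.
Proof. intro H. unfold T. apply cond_pos_sum. intro; apply H. Qed.

Lemma T_mono_S K g : (forall z, 0 <= g z) -> T K g <= T (S K) g.
Proof. intro H. rewrite T_S. pose proof (H (- Z.of_nat (S K))%Z). pose proof (H (Z.of_nat (S K))). lra. Qed.

Lemma T_mono K K' g : (forall z, 0 <= g z) -> (K <= K')%nat -> T K g <= T K' g.
Proof.
  intros H HK. induction HK; [lra|]. eapply Rle_trans; [exact IHHK| apply T_mono_S; auto].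
Qed.

Lemma T_le K g h : (forall z, g z <= h z) -> T K g <= T K h.
Proof. intro H. unfold T. apply sum_Rle. intros; apply H. Qed.

Definition S2 (K : nat) (f : Z -> Z -> R) : R := T K (fun l1 => T K (fun l2 => f l1 l2)).

Lemma S2_mono K K' f : (forall l1 l2, 0 <= f l1 l2) -> (K <= K')%nat -> S2 K f <= S2 K' f.
Proof.
  intros H HK. unfold S2.
  apply Rle_trans with (T K (fun l1 => T K' (fun l2 => f l1 l2))).
  - apply T_le. intro z. apply T_mono; auto.
  - apply T_mono; auto. intro; apply T_nonneg; auto.
Qed.

Lemma S2_le K f h : (forall l1 l2, f l1 l2 <= h l1 l2) -> S2 K f <= S2 K h.
Proof. intro H. unfold S2. apply T_le. intro; apply T_le. auto. Qed.

Definition w (z : Z) : R := / (1 + IZR z ^ 2).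

Lemma T_w K : T K w <= 5 - 4 / (INR K + 1).
Proof.
  induction K.
  - unfold T. simpl. unfold w. simpl. lra.
  - rewrite T_S. unfold w at 1 3. rewrite opp_IZR.
    rewrite <- INR_IZR_INZ. rewrite S_INR.
    set (m := INR K + 1) in *.
    assert (Hm : 1 <= m) by (unfold m; pose proof (pos_INR K); lra).
    replace ((- m) ^ 2) with (m ^ 2) by ring.
    assert (/ (1 + m ^ 2) <= 2 / m - 2 / (m + 1)).
    { apply Rmult_le_reg_r with ((1 + m ^ 2) * (m * (m + 1))); [nra|].
      replace (/ (1 + m ^ 2) * ((1 + m ^ 2) * (m * (m + 1)))) with (m * (m + 1)) by (field; nra).
      replace ((2 / m - 2 / (m + 1)) * ((1 + m ^ 2) * (m * (m + 1)))) with (2 * (1 + m ^ 2)) by (field; lra).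
      nra. }
    unfold m in *. lra.
Qed.

Lemma w_pos z : 0 < w z.
Proof. unfold w. apply Rinv_0_lt_compat. pose proof (pow2_ge_0 (IZR z)). lra. Qed.

Lemma T_w5 K : T K w <= 5.
Proof.
  pose proof (T_w K). assert (0 < 4 / (INR K + 1)).
  { apply Rdiv_lt_0_compat; [lra|]. pose proof (pos_INR K). lra. } lra.
Qed.

Lemma S2_bound K f c : 0 <= c -> (forall l1 l2, f l1 l2 <= c * (w l1 * w l2)) -> S2 K f <= 25 * c.
Proof.
  intros Hc H. eapply Rle_trans; [apply S2_le; exact H|].
  unfold S2.
  assert (E : forall l1, T K (fun l2 => c * (w l1 * w l2)) = c * w l1 * T K w).
  { intro l1. unfold T. rewrite scal_sum. apply sum_eq. intros. ring. }
  rewrite (T_le K _ (fun l1 => c * w l1 * T K w)); [| intro; rewrite E; lra].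
  unfold T at 1. rewrite <- (sum_eq (fun i => w (Z.of_nat i - Z.of_nat K)%Z * (c * T K w))) by (intros; ring).
  rewrite <- scal_sum. fold (T K w).
  pose proof (T_w5 K). pose proof (T_nonneg K w (fun z => Rlt_le _ _ (w_pos z))).
  assert (T K w * T K w <= 25) by nra. replace (c * T K w * T K w) with (c * (T K w * T K w)) by ring. nra.
Qed.


Lemma up_mono x y : x <= y -> (up x <= up y)%Z.
Proof.
  intro H. destruct (archimed x) as [Hx1 Hx2]. destruct (archimed y) as [Hy1 Hy2].
  destruct (Z_le_gt_dec (up x) (up y)) as [|Hlt]; auto.
  assert (up y <= up x - 1)%Z by lia.
  apply IZR_le in H0. rewrite minus_IZR in H0. lra.
Qed.

Lemma site_nonneg a kd x0 y0 l1 l2 : 0 < kd -> 0 <= site_energy a kd x0 y0 l1 l2.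
Proof. intro. unfold site_energy. apply Rmult_le_pos; [lra|]. repeat apply Rplus_le_le_0_compat; apply pow2_ge_0. Qed.

Lemma site_w a kd x0 y0 l1 l2 : 0 < a -> 0 < kd ->
  site_energy a kd x0 y0 l1 l2 <= Cst a kd x0 y0 * (w l1 * w l2).
Proof.
  intros Ha Hk. pose proof (site_bound a kd x0 y0 l1 l2 Ha Hk).
  assert (H1 : 0 < 1 + IZR l1 ^ 2) by (pose proof (pow2_ge_0 (IZR l1)); lra).
  assert (H2 : 0 < 1 + IZR l2 ^ 2) by (pose proof (pow2_ge_0 (IZR l2)); lra).
  unfold w. replace (Cst a kd x0 y0 * (/ (1 + IZR l1 ^ 2) * / (1 + IZR l2 ^ 2)))
    with (Cst a kd x0 y0 / ((1 + IZR l1 ^ 2) * (1 + IZR l2 ^ 2))) by (field; lra).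
  apply Rmult_le_reg_r with ((1 + IZR l1 ^ 2) * (1 + IZR l2 ^ 2)); [nra|].
  unfold Rdiv. rewrite Rmult_assoc, Rinv_l, Rmult_1_r by nra. exact H.
Qed.

Definition fE a kd x0 y0 rho N (l1 l2 : Z) : R :=
  if inB_dec a x0 y0 rho N l1 l2 then site_energy a kd x0 y0 l1 l2 else 0.

Lemma E_eq a kd x0 y0 rho N : E a kd x0 y0 rho N = S2 (boxK a x0 y0 N) (fE a kd x0 y0 rho N).
Proof. reflexivity. Qed.

Lemma E_mono a kd x0 y0 rho N N' : 0 < a -> 0 < kd -> N <= N' ->
  E a kd x0 y0 rho N <= E a kd x0 y0 rho N'.
Proof.
  intros Ha Hk HN. rewrite !E_eq.
  apply Rle_trans with (S2 (boxK a x0 y0 N) (fE a kd x0 y0 rho N')).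
  - apply S2_le. intros l1 l2. unfold fE.
    destruct (inB_dec a x0 y0 rho N l1 l2) as [I|I];
    destruct (inB_dec a x0 y0 rho N' l1 l2) as [I'|I']; try lra.
    + exfalso. apply I'. unfold inB in *. assert (N * a <= N' * a) by nra. lra.
    + apply site_nonneg; auto.
  - apply S2_mono.
    + intros l1 l2. unfold fE. destruct inB_dec; [apply site_nonneg; auto| lra].
    + unfold boxK.
      assert (Rabs x0 / a + Rabs y0 / a + N <= Rabs x0 / a + Rabs y0 / a + N') by lra.
      pose proof (up_mono (N + Rabs x0 / a + Rabs y0 / a) (N' + Rabs x0 / a + Rabs y0 / a) ltac:(lra)).
      lia.
Qed.

Theorem lemmaA2 (a kd x0 y0 rho : R) :
  0 < a -> 0 < kd -> y0 <> 0 -> 0 < rho -> rho * a > 2 * Rabs y0 ->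
  exists L : R, forall eps : R, 0 < eps ->
    exists N0 : R, forall N : R, N > rho -> N > N0 ->
      Rabs (E a kd x0 y0 rho N - L) < eps.
Proof.
  intros Ha Hk _ _ _.
  set (A := fun y => exists N, N > rho /\ y = E a kd x0 y0 rho N).
  assert (HC : 0 <= Cst a kd x0 y0).
  { pose proof (site_bound a kd x0 y0 0 0 Ha Hk). pose proof (site_nonneg a kd x0 y0 0 0 Hk).
    eapply Rle_trans; [|exact H]. apply Rmult_le_pos; auto. simpl. lra. }
  assert (Hb : bound A).
  { exists (25 * Cst a kd x0 y0). intros y [N [_ ->]]. rewrite E_eq.
    apply S2_bound; auto. intros l1 l2. unfold fE. destruct inB_dec.
    - apply site_w; auto.
    - pose proof (w_pos l1). pose proof (w_pos l2).
      apply Rmult_le_pos; auto. apply Rmult_le_pos; lra. }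
  assert (Hne : exists y, A y) by (exists (E a kd x0 y0 rho (rho + 1)); exists (rho + 1); split; [lra|auto]).
  destruct (completeness A Hb Hne) as [L [HL1 HL2]].
  exists L. intros eps Heps.
  destruct (Classical_Prop.classic (exists N1, N1 > rho /\ L - eps < E a kd x0 y0 rho N1)) as [[N1 [HN1 HE1]] | Hno].
  - exists N1. intros N HN HN0.
    assert (E a kd x0 y0 rho N1 <= E a kd x0 y0 rho N) by (apply E_mono; auto; lra).
    assert (E a kd x0 y0 rho N <= L) by (apply HL1; exists N; split; auto).
    unfold Rabs; destruct Rcase_abs; lra.
  - exfalso. assert (L <= L - eps); [|lra].
    apply HL2. intros y [N [HN ->]].
    destruct (Rle_lt_dec (E a kd x0 y0 rho N) (L - eps)); auto.
    exfalso. apply Hno. exists N. split; auto.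
Qed.
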